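(* In $G=GL(\infty,F_2)\ltimes F_2^\infty$, for every nonzero $v\in F_2^\infty$ one has $\mathrm{fpc}(v)=\{e,v\}$.
   Context: For a group $G$ and $g\in G$, $C_G(g)$ is the centralizer of $g$ and $\mathrm{fpc}(g)=\{h\in G:\ \{t^{-1}ht: t\in C_G(g)\}\text{ is finite}\}$. $F_2$ is the field with two elements and $F_2^\infty=\bigoplus_{\mathbb N}F_2$ is the space of finitely supported column vectors, regarded as an abelian group under addition. $GL(\infty,F_2)$ is the group of invertible $\mathbb N\times\mathbb N$ matrices $M$ over $F_2$ with $M_{ij}\neq\delta_{ij}$ for only finitely many $(i,j)$, acting on $F_2^\infty$ by matrix multiplication. $G=GL(\infty,F_2)\ltimes F_2^\infty$ is the semidirect product with $gvg^{-1}=g(v)$. *)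

(* Defs.v *)
(* F_2 is modelled by bool (addition = xorb, multiplication = andb). *)
From Stdlib Require Import Arith List ClassicalEpsilon.

Definition vec := nat -> bool.
Definition mat := nat -> nat -> bool.

(* finitely supported vectors: F_2^infinity = (+)_N F_2 *)
Definition fsupp (v : vec) : Prop :=
  exists N, forall i, N <= i -> v i = false.

Definition fdev (M : mat) : Prop :=
  exists N, forall i j, (N <= i \/ N <= j) -> M i j = Nat.eqb i j.

Fixpoint xsum_upto (f : nat -> bool) (n : nat) : bool :=
  match n with
  | 0 => false
  | S n' => xorb (xsum_upto f n') (f n')
  end.

(* Sum over F_2 of a finitely supported family f : nat -> bool
   (the value is irrelevant if f is not finitely supported). *)
Definition xsum (f : nat -> bool) : bool :=
  xsum_upto f (epsilon (inhabits 0) (fun N => forall j, N <= j -> f j = false)).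

Definition idm : mat := fun i j => Nat.eqb i j.
Definition mmul (M N : mat) : mat := fun i k => xsum (fun j => andb (M i j) (N j k)).
Definition mact (M : mat) (v : vec) : vec := fun i => xsum (fun j => andb (M i j) (v j)).
Definition vadd (v w : vec) : vec := fun i => xorb (v i) (w i).
Definition vzero : vec := fun _ => false.

Definition inGL (M : mat) : Prop :=
  fdev M /\ exists N, fdev N /\ mmul M N = idm /\ mmul N M = idm.

Definition minv (M : mat) : mat :=
  epsilon (inhabits idm) (fun N => fdev N /\ mmul M N = idm /\ mmul N M = idm).

(* Elements of G = GL(infinity,F_2) |x F_2^infinity: the pair (v, g) stands
   for the product v * g (v in the normal subgroup F_2^infinity), so that
   g v g^-1 = g(v). *)
Definition Gt := (vec * mat)%type.

Definition inG (x : Gt) : Prop := fsupp (fst x) /\ inGL (snd x).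

Definition gmul (x y : Gt) : Gt :=
  (vadd (fst x) (mact (snd x) (fst y)), mmul (snd x) (snd y)).

(* inverse of v*g is g^-1 * (-v) = (-(g^-1 v)) * g^-1 ; in char 2, -w = w *)
Definition ginv (x : Gt) : Gt :=
  (mact (minv (snd x)) (fst x), minv (snd x)).

Definition gone : Gt := (vzero, idm).

Definition ofvec (v : vec) : Gt := (v, idm).

Definition centralizer (g : Gt) (t : Gt) : Prop := inG t /\ gmul t g = gmul g t.

Definition fpc (g : Gt) (h : Gt) : Prop :=
  inG h /\
  exists s : list Gt, forall t, centralizer g t -> In (gmul (ginv t) (gmul h t)) s.

(* Main.v *)
Require Import Defs.
From Stdlib Require Import Arith List ClassicalEpsilon Lia Bool FunctionalExtensionality Classical.

Definition fs (f : nat -> bool) := exists N, forall j, N <= j -> f j = false.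

Lemma xsum_upto_zero f n : (forall j, j < n -> f j = false) -> xsum_upto f n = false.
Proof. induction n; simpl; intros H; auto. rewrite IHn by (intros; apply H; lia). rewrite H by lia; auto. Qed.

Lemma xsum_upto_stable f N : (forall j, N <= j -> f j = false) ->
  forall m, N <= m -> xsum_upto f m = xsum_upto f N.
Proof. intros H m. induction m; intros Hm.
 - assert (N = 0) by lia; subst; auto.
 - destruct (Nat.eq_dec N (S m)) as [->|]; auto. simpl. rewrite IHm by lia. rewrite H by lia. apply xorb_false_r. Qed.

Lemma xsum_eq f N : (forall j, N <= j -> f j = false) -> xsum f = xsum_upto f N.
Proof. intros H. unfold xsum.
  set (P := fun N => forall j, N <= j -> f j = false).
  assert (HP : P (epsilon (inhabits 0) P)) by (apply epsilon_spec; exists N; exact H).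
  set (N0 := epsilon (inhabits 0) P) in *.
  rewrite <- (xsum_upto_stable f N0 HP (max N N0)) by lia.
  rewrite <- (xsum_upto_stable f N H (max N N0)) by lia. reflexivity. Qed.

Lemma xsum_upto_xor f g n : xsum_upto (fun j => xorb (f j) (g j)) n = xorb (xsum_upto f n) (xsum_upto g n).
Proof. induction n; simpl; auto. rewrite IHn. destruct (xsum_upto f n), (xsum_upto g n), (f n), (g n); auto. Qed.

Lemma xsum_xor f g : fs f -> fs g -> xsum (fun j => xorb (f j) (g j)) = xorb (xsum f) (xsum g).
Proof. intros [N1 H1] [N2 H2].
  rewrite (xsum_eq f (max N1 N2)) by (intros; apply H1; lia).
  rewrite (xsum_eq g (max N1 N2)) by (intros; apply H2; lia).
  rewrite (xsum_eq _ (max N1 N2)). apply xsum_upto_xor.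
  intros j Hj; rewrite H1, H2 by lia; auto. Qed.

Lemma xsum_zero : xsum (fun _ => false) = false.
Proof. rewrite (xsum_eq _ 0); auto. Qed.

Lemma xsum_andl b f : xsum (fun j => b && f j) = b && xsum f.
Proof. destruct b; simpl. reflexivity. apply xsum_zero. Qed.

Lemma xsum_andr b f : xsum (fun j => f j && b) = xsum f && b.
Proof. destruct b; simpl.
 - rewrite andb_true_r. f_equal. extensionality j; destruct (f j); auto.
 - rewrite andb_false_r. replace (fun j => f j && false) with (fun _:nat => false). apply xsum_zero.
   extensionality j; destruct (f j); auto. Qed.

Lemma xsum_upto_delta p f n : p < n -> xsum_upto (fun j => (p =? j) && f j) n = f p.
Proof. induction n; intros H; [lia|]. simpl.
  destruct (Nat.eq_dec p n) as [->|].
  - rewrite xsum_upto_zero. rewrite Nat.eqb_refl; auto.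
    intros j Hj. destruct (Nat.eqb_spec n j); [lia|auto].
  - rewrite IHn by lia. destruct (Nat.eqb_spec p n); [lia|]. apply xorb_false_r. Qed.

Lemma xsum_delta p f : xsum (fun j => (p =? j) && f j) = f p.
Proof. rewrite (xsum_eq _ (S p)). apply xsum_upto_delta; lia.
  intros j Hj. destruct (Nat.eqb_spec p j); [lia|auto]. Qed.

Lemma xsum_delta_r q f : xsum (fun j => f j && (j =? q)) = f q.
Proof. rewrite <- (xsum_delta q f). f_equal. extensionality j.
  rewrite Nat.eqb_sym. apply andb_comm. Qed.

Lemma xsum_upto_swap F n m :
  xsum_upto (fun j => xsum_upto (F j) m) n = xsum_upto (fun l => xsum_upto (fun j => F j l) n) m.
Proof. induction n; simpl.
 - symmetry; apply xsum_upto_zero; auto.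
 - rewrite IHn. rewrite xsum_upto_xor. reflexivity. Qed.

Lemma xsum_swap F N : (forall j l, N <= j \/ N <= l -> F j l = false) ->
  xsum (fun j => xsum (F j)) = xsum (fun l => xsum (fun j => F j l)).
Proof. intros H.
  rewrite (xsum_eq (fun j => xsum (F j)) N).
  rewrite (xsum_eq (fun l => xsum (fun j => F j l)) N).
  - transitivity (xsum_upto (fun j => xsum_upto (F j) N) N).
    + apply f_equal2; auto. extensionality j. apply xsum_eq. intros; apply H; lia.
    + rewrite xsum_upto_swap. f_equal. extensionality l. symmetry; apply xsum_eq. intros; apply H; lia.
  - intros l Hl. rewrite (xsum_eq _ 0); auto.
  - intros j Hj. rewrite (xsum_eq _ 0); auto.
Qed.

Lemma mact_assoc M N w : fdev M -> fdev N -> fsupp w -> mact M (mact N w) = mact (mmul M N) w.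
Proof. intros [NM HM] [NN HN] [Nw Hw]. extensionality i. unfold mact, mmul.
  transitivity (xsum (fun j => xsum (fun l => M i j && (N j l && w l)))).
  { f_equal. extensionality j. symmetry. apply xsum_andl. }
  transitivity (xsum (fun l => xsum (fun j => (M i j && N j l) && w l))).
  2:{ f_equal. extensionality l. apply xsum_andr. }
  rewrite (xsum_swap _ (max (max NM NN) (max Nw (S i)))).
  { f_equal; extensionality l; f_equal; extensionality j. apply andb_assoc. }
  intros j l [Hj|Hl].
  - rewrite HM by lia. destruct (Nat.eqb_spec i j); [lia|auto].
  - rewrite (Hw l) by lia. rewrite !andb_false_r; auto.
Qed.

Lemma mmul_assoc M N P : fdev M -> fdev N -> fdev P -> mmul M (mmul N P) = mmul (mmul M N) P.
Proof. intros HM HN HP. extensionality i. extensionality k.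
  change (mact M (mact N (fun j => P j k)) i = mact (mmul M N) (fun j => P j k) i).
  rewrite mact_assoc; auto.
  destruct HP as [NP HP]. exists (max NP (S k)). intros j Hj. rewrite HP by lia.
  destruct (Nat.eqb_spec j k); [lia|auto]. Qed.

Lemma mmul_idm_r M : mmul M idm = M.
Proof. extensionality i; extensionality k. unfold mmul, idm. apply (xsum_delta_r k (M i)). Qed.
Lemma mmul_idm_l M : mmul idm M = M.
Proof. extensionality i; extensionality k. unfold mmul, idm. apply (xsum_delta i (fun j => M j k)). Qed.
Lemma mact_idm w : mact idm w = w.
Proof. extensionality i. unfold mact, idm. apply xsum_delta. Qed.
Lemma mact_zero M : mact M vzero = vzero.
Proof. extensionality i. unfold mact, vzero.
  replace (fun j => M i j && false) with (fun _ : nat => false). apply xsum_zero.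
  extensionality j; destruct (M i j); auto. Qed.
Lemma vadd_zero_r w : vadd w vzero = w.
Proof. extensionality i; unfold vadd, vzero; apply xorb_false_r. Qed.
Lemma vadd_zero_l w : vadd vzero w = w.
Proof. extensionality i; unfold vadd, vzero; apply xorb_false_l. Qed.
Lemma vadd_self w : vadd w w = vzero.
Proof. extensionality i; unfold vadd, vzero; apply xorb_nilpotent. Qed.

Lemma mact_vadd M w z : fsupp w -> fsupp z -> mact M (vadd w z) = vadd (mact M w) (mact M z).
Proof. intros [N1 H1] [N2 H2]. extensionality i. unfold mact, vadd.
  rewrite <- xsum_xor.
  - f_equal; extensionality j. destruct (M i j), (w j), (z j); auto.
  - exists N1; intros j Hj; rewrite H1 by lia; apply andb_false_r.
  - exists N2; intros j Hj; rewrite H2 by lia; apply andb_false_r. Qed.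

Lemma inv_unique n g : fdev n -> fdev g -> mmul n g = idm -> mmul g g = idm -> n = g.
Proof. intros Hn Hg H1 H2.
  rewrite <- (mmul_idm_r n). rewrite <- H2. rewrite mmul_assoc by auto. rewrite H1.
  apply mmul_idm_l. Qed.

Lemma minv_spec g : inGL g -> fdev (minv g) /\ mmul g (minv g) = idm /\ mmul (minv g) g = idm.
Proof. intros [_ H]. unfold minv. apply epsilon_spec. exact H. Qed.

Definition R1 (x y : vec) : mat := fun p q => xorb (Nat.eqb p q) (x p && y q).
Definition dot (y w : vec) := xsum (fun l => y l && w l).

Lemma mact_R1 x y w : fsupp y -> mact (R1 x y) w = fun p => xorb (w p) (x p && dot y w).
Proof. intros [Ny Hy]. extensionality p. unfold mact, R1, dot.
  rewrite <- xsum_andl. rewrite <- xsum_delta with (p:=p) (f:=w) at 1.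
  rewrite <- xsum_xor.
  - f_equal; extensionality q. destruct (p =? q), (x p), (y q), (w q); auto.
  - exists (S p). intros j Hj. destruct (Nat.eqb_spec p j); [lia|auto].
  - exists Ny. intros j Hj. rewrite Hy by lia. destruct (x p); auto. Qed.

Lemma mmul_R1_l x y N p q : fsupp y ->
  mmul (R1 x y) N p q = xorb (N p q) (x p && xsum (fun r => y r && N r q)).
Proof. intros Hy. apply (f_equal (fun f => f p) (mact_R1 x y (fun r => N r q) Hy)). Qed.

Lemma mmul_R1_r M x y p q : fsupp x ->
  mmul M (R1 x y) p q = xorb (M p q) (xsum (fun r => M p r && x r) && y q).
Proof. intros [Nx Hx]. unfold mmul, R1.
  rewrite <- xsum_andr. rewrite <- xsum_delta_r with (q:=q) (f:=M p) at 1.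
  rewrite <- xsum_xor.
  - f_equal; extensionality r. destruct (r =? q), (M p r), (x r), (y q); auto.
  - exists (S q). intros j Hj. destruct (Nat.eqb_spec j q); [lia|]. apply andb_false_r.
  - exists Nx. intros j Hj. rewrite Hx by lia. destruct (M p j); auto. Qed.

Lemma R1_sq x y : fsupp x -> fsupp y -> dot y x = false -> mmul (R1 x y) (R1 x y) = idm.
Proof. intros Hx Hy Hd. extensionality p; extensionality q.
  rewrite mmul_R1_r by auto.
  change (xsum (fun r => R1 x y p r && x r)) with (mact (R1 x y) x p).
  rewrite mact_R1 by auto. rewrite Hd. unfold R1, idm.
  destruct (p =? q), (x p), (y q); auto. Qed.

Lemma R1_fdev x y : fsupp x -> fsupp y -> fdev (R1 x y).
Proof. intros [Nx Hx] [Ny Hy]. exists (max Nx Ny). intros i j [Hi|Hj]; unfold R1.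
  - rewrite Hx by lia. apply xorb_false_r.
  - rewrite (Hy j) by lia. rewrite andb_false_r. apply xorb_false_r. Qed.

Lemma R1_inGL x y : fsupp x -> fsupp y -> dot y x = false -> inGL (R1 x y).
Proof. intros. split. apply R1_fdev; auto. exists (R1 x y). split. apply R1_fdev; auto.
  split; apply R1_sq; auto. Qed.

Lemma minv_R1 x y : fsupp x -> fsupp y -> dot y x = false -> minv (R1 x y) = R1 x y.
Proof. intros. destruct (minv_spec (R1 x y)) as [G1 [G2 G3]]. apply R1_inGL; auto.
  apply inv_unique; auto. apply R1_fdev; auto. apply R1_sq; auto. Qed.

Definition ev (i : nat) : vec := fun l => Nat.eqb l i.

Lemma ev_fsupp i : fsupp (ev i).
Proof. exists (S i). intros j Hj. unfold ev. destruct (Nat.eqb_spec j i); [lia|auto]. Qed.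

Lemma dot_ev_r y k : dot y (ev k) = y k.
Proof. unfold dot, ev. apply xsum_delta_r. Qed.
Lemma dot_ev_l k w : dot (ev k) w = w k.
Proof. unfold dot, ev. rewrite <- (xsum_delta k w). f_equal. extensionality l. rewrite Nat.eqb_sym; auto. Qed.
Lemma dot_vadd_l y1 y2 w : fsupp y1 -> fsupp y2 -> dot (vadd y1 y2) w = xorb (dot y1 w) (dot y2 w).
Proof. intros [N1 H1] [N2 H2]. unfold dot, vadd. rewrite <- xsum_xor.
  - f_equal; extensionality l. destruct (y1 l), (y2 l), (w l); auto.
  - exists N1; intros; rewrite H1 by lia; auto.
  - exists N2; intros; rewrite H2 by lia; auto. Qed.
Lemma fsupp_vadd y1 y2 : fsupp y1 -> fsupp y2 -> fsupp (vadd y1 y2).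
Proof. intros [N1 H1] [N2 H2]. exists (max N1 N2). intros; unfold vadd; rewrite H1, H2 by lia; auto. Qed.

Lemma pigeon (s : list Gt) : forall (f : nat -> Gt) K, (forall k, K <= k -> In (f k) s) ->
  (forall k m, K <= k -> k < m -> f k <> f m) -> False.
Proof. induction s as [|a s IH]; intros f K Hin Hinj.
  - exact (Hin K (le_n K)).
  - destruct (classic (exists k, K <= k /\ f k = a)) as [[k0 [Hk0 Hfk0]]|Hno].
    + apply (IH f (S k0)). 2:{ intros; apply Hinj; lia. }
      intros k Hk. destruct (Hin k) as [E|E]; [lia| |auto].
      exfalso. apply (Hinj k0 k); [lia|lia|]. congruence.
    + apply (IH f K); auto. intros k Hk. destruct (Hin k Hk) as [E|E]; auto.
      exfalso; apply Hno; eauto. Qed.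

Lemma conj_R1 x y u a : fsupp x -> fsupp y -> dot y x = false ->
  gmul (ginv (vzero, R1 x y)) (gmul (u, a) (vzero, R1 x y)) =
  (mact (R1 x y) u, mmul (R1 x y) (mmul a (R1 x y))).
Proof. intros. unfold ginv, gmul; simpl. rewrite minv_R1 by auto.
  rewrite !mact_zero, vadd_zero_r, vadd_zero_l. reflexivity. Qed.

Lemma cent_R1 v x y : fsupp x -> fsupp y -> dot y x = false -> dot y v = false ->
  centralizer (ofvec v) (vzero, R1 x y).
Proof. intros Hx Hy Hd Hv. split.
  - split. exists 0; auto. apply R1_inGL; auto.
  - unfold gmul, ofvec; simpl. rewrite mact_R1 by auto. rewrite Hv, mact_zero, mmul_idm_r, mmul_idm_l.
    f_equal. extensionality i. unfold vadd, vzero. destruct (x i), (v i); auto. Qed.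

Lemma conjmat a j k p q : mmul (R1 (ev j) (ev k)) (mmul a (R1 (ev j) (ev k))) p q =
  xorb (xorb (a p q) (a p j && (q =? k))) ((p =? j) && xorb (a k q) (a k j && (q =? k))).
Proof. rewrite mmul_R1_l by apply ev_fsupp.
  replace (xsum (fun r => ev k r && mmul a (R1 (ev j) (ev k)) r q))
    with (mmul a (R1 (ev j) (ev k)) k q).
  2:{ symmetry. apply (dot_ev_l k (fun r => mmul a (R1 (ev j) (ev k)) r q)). }
  rewrite !mmul_R1_r by apply ev_fsupp.
  change (xsum (fun r => a p r && ev j r)) with (dot (a p) (ev j)).
  change (xsum (fun r => a k r && ev j r)) with (dot (a k) (ev j)).
  rewrite !dot_ev_r. unfold ev. reflexivity. Qed.

Lemma sep_y u v : u <> vzero -> u <> v -> exists y, fsupp y /\ dot y v = false /\ dot y u = true.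
Proof. intros H0 H1.
  destruct (classic (exists i, u i = true /\ v i = false)) as [[i [Hi1 Hi2]]|Hno].
  - exists (ev i). split. apply ev_fsupp. rewrite !dot_ev_l; auto.
  - assert (exists i, u i = true) as [i Hi].
    { apply NNPP; intro C. apply H0. extensionality i. unfold vzero.
      destruct (u i) eqn:E; auto. exfalso; apply C; eauto. }
    assert (exists j, u j <> v j) as [j Hj].
    { apply NNPP; intro C. apply H1. extensionality j. apply NNPP; intro D. apply C; eauto. }
    assert (v i = true). { destruct (v i) eqn:E; auto. exfalso; apply Hno; eauto. }
    assert (u j = false /\ v j = true) as [Hu Hv].
    { destruct (u j) eqn:E, (v j) eqn:F; auto; exfalso; try congruence. apply Hno; eauto. }
    exists (vadd (ev i) (ev j)). split. apply fsupp_vadd; apply ev_fsupp.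
    rewrite !dot_vadd_l by apply ev_fsupp. rewrite !dot_ev_l. rewrite H, Hi, Hu, Hv. auto. Qed.

Theorem lemma4p4 :
  forall v : vec, fsupp v -> v <> vzero ->
  forall h : Gt, fpc (ofvec v) h <-> (h = gone \/ h = ofvec v).
Proof.
  intros v Hv Hv0 h. split.
  - intros [[Hu HaGL] [s Hs]]. destruct h as [u a]; simpl in *.
    destruct (classic (a = idm)) as [->|Ha].
    + destruct (classic (u = vzero)) as [->|Hu0]; [left; reflexivity|].
      destruct (classic (u = v)) as [->|Huv]; [right; reflexivity|].
      exfalso. destruct (sep_y u v Hu0 Huv) as [y [Hy [Hyv Hyu]]].
      pose proof Hy as [Ny HNy]. pose proof Hu as [Nu HNu]. pose proof Hv as [Nv HNv].
      apply (pigeon s (fun k => gmul (ginv (vzero, R1 (ev k) y)) (gmul (u, idm) (vzero, R1 (ev k) y)))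
                    (max Ny (max Nu Nv))).
      * intros k Hk. apply Hs. apply cent_R1; auto. apply ev_fsupp. rewrite dot_ev_r. apply HNy; lia.
      * intros k m Hk Hm E. rewrite !conj_R1 in E; try apply ev_fsupp; auto.
        2,3: rewrite dot_ev_r; apply HNy; lia.
        apply (f_equal (fun c => fst c k)) in E. simpl in E.
        rewrite !mact_R1 in E by auto. rewrite Hyu in E. unfold ev in E.
        rewrite Nat.eqb_refl in E. destruct (Nat.eqb_spec k m); [lia|].
        rewrite HNu in E by lia. discriminate.
    + exfalso. destruct HaGL as [[Na HNa] _].
      assert (exists p j, a p j <> (p =? j)) as [p [j Hpj]].
      { apply NNPP; intro C. apply Ha. extensionality p; extensionality j.
        apply NNPP; intro D. apply C; eauto. }
      assert (p < Na /\ j < Na) as [Hp Hj].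
      { split; apply NNPP; intro D; apply Hpj; apply HNa; lia. }
      pose proof Hv as [Nv HNv].
      apply (pigeon s (fun k => gmul (ginv (vzero, R1 (ev j) (ev k))) (gmul (u, a) (vzero, R1 (ev j) (ev k))))
                    (max Na Nv)).
      * intros k Hk. apply Hs. apply cent_R1; try apply ev_fsupp.
        rewrite dot_ev_l; unfold ev; destruct (Nat.eqb_spec k j); [lia|auto].
        rewrite dot_ev_l; apply HNv; lia.
      * intros k m Hk Hm E. rewrite !conj_R1 in E; try apply ev_fsupp; auto.
        2,3: rewrite dot_ev_l; unfold ev; apply Nat.eqb_neq; lia.
        apply (f_equal (fun c => snd c p k)) in E. simpl in E.
        rewrite !conjmat in E. rewrite Nat.eqb_refl in E.
        rewrite (HNa p k), (HNa k k), (HNa k j), (HNa m k), (HNa m j) in E by lia.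
        rewrite Nat.eqb_refl in E.
        destruct (Nat.eqb_spec p k); [lia|]. destruct (Nat.eqb_spec k j); [lia|].
        destruct (Nat.eqb_spec k m); [lia|]. destruct (Nat.eqb_spec m k); [lia|].
        destruct (Nat.eqb_spec m j); [lia|].
        apply Hpj. destruct (a p j), (p =? j); simpl in E; auto.
  - assert (HidGL : inGL idm).
    { assert (fdev idm) by (exists 0; auto). split; auto. exists idm. rewrite mmul_idm_l; auto. }
    intros [->| ->].
    + split. split; [exists 0; auto|auto].
      exists (gone :: nil). intros [w g] [[Hw Hg] _]. left. simpl in *.
      destruct (minv_spec g Hg) as [_ [_ H3]].
      unfold gmul, ginv, gone; simpl. rewrite vadd_zero_l, mact_idm, mmul_idm_l, H3, vadd_self. reflexivity.
    + split. split; auto.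
      exists (ofvec v :: nil). intros [w g] [[Hw Hg] Hc]. left. simpl in *.
      destruct (minv_spec g Hg) as [Hn [_ H3]].
      assert (Hgv : mact g v = v).
      { unfold gmul, ofvec in Hc; simpl in Hc. apply (f_equal fst) in Hc. simpl in Hc.
        rewrite mact_idm in Hc. extensionality i. apply (f_equal (fun f => f i)) in Hc.
        unfold vadd in Hc. destruct (w i), (mact g v i), (v i); simpl in *; congruence. }
      unfold gmul, ginv, ofvec; simpl. rewrite mact_idm, mmul_idm_l, H3.
      rewrite mact_vadd by auto. rewrite <- Hgv at 2. rewrite mact_assoc by (auto; apply Hg).
      rewrite H3, mact_idm. f_equal. extensionality i. unfold vadd.
      destruct (mact (minv g) w i), (v i); auto.
Qed.
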